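(* For every general S4K-frame $\mathfrak F$ and every $\mathcal L_{\multimap}$-formula $\varphi$: $\mathfrak F\Vdash t(\varphi)$ if and only if $\hat\rho\mathfrak F\Vdash\varphi$.
   Context: $\mathcal L_{\multimap}$: atoms, $\top,\bot,\wedge,\vee,\to,\multimap$. $\mathcal L_{i,m}$: classical bimodal language with boxes $\Box_i,\Box_m$. The translation $t:\mathcal L_{\multimap}\to\mathcal L_{i,m}$: $t(p)=\Box_ip$, $t(\top)=\top$, $t(\bot)=\bot$, $t(\varphi\wedge\psi)=\Box_i(t\varphi\wedge t\psi)$, $t(\varphi\vee\psi)=\Box_i(t\varphi\vee t\psi)$, $t(\varphi\to\psi)=\Box_i(t\varphi\to t\psi)$, $t(\varphi\multimap\psi)=\Box_i\Box_m(t\varphi\to t\psi)$. General S4K-frame $(X,R_i,R_m,P)$: $R_i$ preorder, $R_m$ binary relation, $P$ Boolean subalgebra of $\mathcal P(X)$ closed under $[i]a=\{x\mid\forall y(xR_iy\Rightarrow y\in a)\}$ and $[m]a$ (likewise); $\mathfrak F\Vdash\chi$ means $\chi$ is true at all points under all valuations into $P$ (standard Kripke clauses). For such $\mathfrak F$: $xR_m^*z$ iff $\exists y(xR_iy\wedge yR_mz)$; $x\sim y$ iff $xR_iy\wedge yR_ix$; $[x]$ its class, $[X]$ the classes; $[x][R_i][y]$ iff $xR_iy$; $[x][R_m^*][y]$ iff $xR_m^*y'$ for some $y'\sim y$; $\hat\rho P:=\{\{[x]\mid x\in[i]b\}\mid b\in P\}$; $\hat\rho\mathfrak F:=([X],[R_i],[R_m^*],\hat\rho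 P)$, a general $\multimap$-frame. For a general $\multimap$-frame $(Y,\preceq,\sqsubset,Q)$ (here $Q$ is a family of $\preceq$-upsets closed under the relevant operations), $\Vdash\varphi$ means: under every valuation into $Q$ the truth set of $\varphi$ is $Y$, where $\to$ is interpreted by $a\Rightarrow b=\{x\mid\forall y(x\preceq y,y\in a\Rightarrow y\in b)\}$ and $\multimap$ by $a\Rrightarrow b=\{x\mid\forall y(x\sqsubset y,y\in a\Rightarrow y\in b)\}$, $\wedge,\vee$ by $\cap,\cup$. *)

(* Defs.v *)
From Stdlib Require Import Arith.
Set Implicit Arguments.

Definition set (X : Type) := X -> Prop.

Inductive iform : Type :=
| IVar : nat -> iform
| ITop : iform
| IBot : iform
| IAnd : iform -> iform -> iform
| IOr  : iform -> iform -> iform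
| IImp : iform -> iform -> iform
| ILol : iform -> iform -> iform.

(* L_{i,m}: classical bimodal language (negation = imp _ bot) *)
Inductive mform : Type :=
| MVar : nat -> mform
| MTop : mform
| MBot : mform
| MAnd : mform -> mform -> mform
| MOr  : mform -> mform -> mform
| MImp : mform -> mform -> mform
| MBoxi : mform -> mform
| MBoxm : mform -> mform.

Fixpoint tr (phi : iform) : mform :=
  match phi with
  | IVar p => MBoxi (MVar p)
  | ITop => MTop
  | IBot => MBot
  | IAnd a b => MBoxi (MAnd (tr a) (tr b))
  | IOr a b => MBoxi (MOr (tr a) (tr b))
  | IImp a b => MBoxi (MImp (tr a) (tr b))
  | ILol a b => MBoxi (MBoxm (MImp (tr a) (tr b)))
  end.

Definition box (X : Type) (R : X -> X -> Prop) (a : set X) : set X :=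
  fun x => forall y, R x y -> a y.

Record S4Kframe := {
  carrier : Type;
  Ri : carrier -> carrier -> Prop;
  Rm : carrier -> carrier -> Prop;
  Pset : set carrier -> Prop;
  Ri_refl : forall x, Ri x x;
  Ri_trans : forall x y z, Ri x y -> Ri y z -> Ri x z;
  P_empty : Pset (fun _ => False);
  P_full : Pset (fun _ => True);
  P_compl : forall a, Pset a -> Pset (fun x => ~ a x);
  P_inter : forall a b, Pset a -> Pset b -> Pset (fun x => a x /\ b x);
  P_union : forall a b, Pset a -> Pset b -> Pset (fun x => a x \/ b x);
  P_boxi : forall a, Pset a -> Pset (box Ri a);
  P_boxm : forall a, Pset a -> Pset (box Rm a)
}.

Fixpoint mtruth (F : S4Kframe) (V : nat -> set (carrier F)) (chi : mform)
  : set (carrier F) :=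
  match chi with
  | MVar p => V p
  | MTop => fun _ => True
  | MBot => fun _ => False
  | MAnd a b => fun x => mtruth F V a x /\ mtruth F V b x
  | MOr a b => fun x => mtruth F V a x \/ mtruth F V b x
  | MImp a b => fun x => mtruth F V a x -> mtruth F V b x
  | MBoxi a => box (@Ri F) (mtruth F V a)
  | MBoxm a => box (@Rm F) (mtruth F V a)
  end.

Definition mvalid (F : S4Kframe) (chi : mform) : Prop :=
  forall V : nat -> set (carrier F), (forall p, Pset F (V p)) ->
    forall x, mtruth F V chi x.

Record LFrame := {
  Lcarrier : Type;
  Lle : Lcarrier -> Lcarrier -> Prop;
  Lsq : Lcarrier -> Lcarrier -> Prop;
  Lset : set Lcarrier -> Prop
}.

Fixpoint itruth (G : LFrame) (V : nat -> set (Lcarrier G)) (phi : iform)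
  : set (Lcarrier G) :=
  match phi with
  | IVar p => V p
  | ITop => fun _ => True
  | IBot => fun _ => False
  | IAnd a b => fun x => itruth G V a x /\ itruth G V b x
  | IOr a b => fun x => itruth G V a x \/ itruth G V b x
  | IImp a b => fun x => forall y, Lle G x y -> itruth G V a y -> itruth G V b y
  | ILol a b => fun x => forall y, Lsq G x y -> itruth G V a y -> itruth G V b y
  end.

Definition ivalid (G : LFrame) (phi : iform) : Prop :=
  forall V : nat -> set (Lcarrier G), (forall p, Lset G (V p)) ->
    forall y, itruth G V phi y.

Section RhoHat.
Variable F : S4Kframe.
Let X := carrier F.

Definition equivi (x y : X) : Prop := Ri F x y /\ Ri F y x.
Definition cls (x : X) : set X := fun y => equivi x y.

Definition classes : Type := { c : set X | exists x, c = cls x }.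

Definition Rmstar (x z : X) : Prop := exists y, Ri F x y /\ Rm F y z.

Definition cRi (c d : classes) : Prop :=
  exists x y, proj1_sig c = cls x /\ proj1_sig d = cls y /\ Ri F x y.

Definition cRmstar (c d : classes) : Prop :=
  exists x y y', proj1_sig c = cls x /\ proj1_sig d = cls y /\
    equivi y' y /\ Rmstar x y'.

Definition rhoP (A : set classes) : Prop :=
  exists b, Pset F b /\
    forall c, A c <-> exists x, proj1_sig c = cls x /\ box (Ri F) b x.

Definition rho_hat : LFrame :=
  {| Lcarrier := classes; Lle := cRi; Lsq := cRmstar; Lset := rhoP |}.
End RhoHat.

(* Main.v *)
Require Import Defs.
From Stdlib Require Import FunctionalExtensionality PropExtensionality IndefiniteDescription.

Lemma cls_eq (F : S4Kframe) (x y : carrier F) : cls F x = cls F y -> equivi F x y.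
Proof.
  intro E. assert (H : cls F y y) by (split; apply Ri_refl).
  rewrite <- E in H. exact H.
Qed.

Lemma cls_ext (F : S4Kframe) (x y : carrier F) : equivi F x y -> cls F x = cls F y.
Proof.
  intros [H1 H2]. apply functional_extensionality; intro z.
  apply propositional_extensionality. unfold cls, equivi; split; intros [A B]; split.
  - eapply Ri_trans; eauto.
  - eapply Ri_trans; eauto.
  - eapply Ri_trans; eauto.
  - eapply Ri_trans; eauto.
Qed.

Lemma upset (F : S4Kframe) V phi (x y : carrier F) :
  Ri F x y -> mtruth F V (tr phi) x -> mtruth F V (tr phi) y.
Proof.
  destruct phi; simpl; auto; intros R H z Ryz; apply H; eapply Ri_trans; eauto.
Qed.

Lemma truth (F : S4Kframe) (U : nat -> set (classes F)) (V : nat -> set (carrier F))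
  (HU : forall p c, U p c <-> exists x, proj1_sig c = cls F x /\ box (Ri F) (V p) x) :
  forall phi (c : classes F) x, proj1_sig c = cls F x ->
    (mtruth F V (tr phi) x <-> itruth (rho_hat F) U phi c).
Proof.
  induction phi; intros c x Hc; simpl.
  - rewrite HU. split.
    + intro H. exists x; auto.
    + intros [x' [E H]]. rewrite Hc in E. apply cls_eq in E. destruct E as [E1 E2].
      intros y R. apply H. eapply Ri_trans; eauto.
  - tauto.
  - tauto.
  - rewrite <- (IHphi1 c x Hc), <- (IHphi2 c x Hc). split.
    + intro H. apply H, Ri_refl.
    + intros [A B] y R. split; eapply upset; eauto.
  - rewrite <- (IHphi1 c x Hc), <- (IHphi2 c x Hc). split.
    + intro H. apply H, Ri_refl.
    + intros [A|B] y R; [left|right]; eapply upset; eauto.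
  - split.
    + intros H d [x1 [y1 [E1 [E2 R]]]] Ha. rewrite Hc in E1.
      apply cls_eq in E1. destruct E1 as [E1 _].
      apply (IHphi2 d y1 E2). apply H.
      * eapply Ri_trans; eauto.
      * apply (IHphi1 d y1 E2); exact Ha.
    + intros H y Rxy Ha.
      set (d := exist (fun s => exists x, s = cls F x) (cls F y) (ex_intro _ y eq_refl) : classes F).
      apply (IHphi2 d y eq_refl). apply H.
      * exists x, y; repeat split; auto.
      * apply (IHphi1 d y eq_refl); exact Ha.
  - split.
    + intros H d [x1 [y [y' [E1 [E2 [Eq [z [R1 R2]]]]]]]] Ha.
      rewrite Hc in E1. apply cls_eq in E1. destruct E1 as [E1 _].
      assert (E3 : proj1_sig d = cls F y').
      { rewrite E2. apply cls_ext. destruct Eq; split; auto. }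
      apply (IHphi2 d y' E3). apply (H z).
      * eapply Ri_trans; eauto.
      * exact R2.
      * apply (IHphi1 d y' E3); exact Ha.
    + intros H z Rxz w Rzw Aw.
      set (d := exist (fun s => exists x, s = cls F x) (cls F w) (ex_intro _ w eq_refl) : classes F).
      apply (IHphi2 d w eq_refl). apply H.
      * exists x, w, w; repeat split; auto; try apply Ri_refl. exists z; auto.
      * apply (IHphi1 d w eq_refl); exact Aw.
Qed.

Theorem lemma4p11 : forall (F : S4Kframe) (phi : iform),
  mvalid F (tr phi) <-> ivalid (rho_hat F) phi.
Proof.
  intros F phi. split.
  - intros H U HU c.
    set (V := fun p => proj1_sig (constructive_indefinite_description _ (HU p))).
    assert (HV : forall p, Pset F (V p) /\ forall c, U p c <-> exists x, proj1_sig c = cls F x /\ box (Ri F) (V p) x).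
    { intro p. unfold V. destruct (constructive_indefinite_description _ (HU p)) as [b Hb]. exact Hb. }
    destruct (proj2_sig c) as [x Hx].
    apply (truth F U V (fun p => proj2 (HV p)) phi c x Hx).
    apply H. intro p; apply HV.
  - intros H V HV x.
    set (U := fun p (c : classes F) => exists x, proj1_sig c = cls F x /\ box (Ri F) (V p) x).
    set (d := exist (fun s => exists x, s = cls F x) (cls F x) (ex_intro _ x eq_refl) : classes F).
    apply (truth F U V (fun p c => iff_refl _) phi d x eq_refl).
    apply H. intro p. exists (V p). split; [apply HV | intro c; apply iff_refl].
Qed.
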